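(* In the setting of the context, the bilinear form $\langle a,b\rangle=\lambda^{-2}F(ae_2e_1b)$, $a\in A$, $b\in B$, is non-degenerate on $A\otimes B$.
   Context: $k$ is a field; $C_R(S)=\{r\in R:rs=sr\ \forall s\in S\}$. $N\subseteq M$ is a strongly separable, irreducible extension of $k$-algebras: $C_M(N)=k1$ and there are an $N$-bimodule map $E:M\to N$ and $x_1,\dots,x_n,y_1,\dots,y_n\in M$ with $\sum_iE(mx_i)y_i=m=\sum_ix_iE(y_im)$ for all $m\in M$, $E(1)\neq0$, $\sum_ix_iy_i\neq0$; normalized so that $E(1)=1$, whence $\sum_ix_iy_i=\lambda^{-1}1$ with $0\neq\lambda\in k$. Basic construction: given $S\subseteq R$, an $S$-bimodule map $E_S:R\to S$ with $E_S(1)=1$ and $r_i,s_i\in R$ with $\sum_iE_S(rr_i)s_i=r=\sum_ir_iE_S(s_ir)$ and $\sum_ir_is_i=\lambda^{-1}1$, set $R_1=R\otimes_SR$ with product $(a\otimes b)(c\otimes d)=aE_S(bc)\otimes d$, unit $\sum_ir_i\otimes s_i$, $R\subseteq R_1$ via $r\mapsto\sum_irr_i\otimes s_i$, Jones idempotent $e=1\otimes1$, $E_R:R_1\to R$, $a\otimes b\mapsto\lambda ab$; then $E_R$, $\lambda^{-1}r_i\otimes1$, $1\otimes s_i$ satisfy the same conditions with the same $\lambda$. From $(N\subseteq M,E)$ get $M_1,e_1,E_M$; from $(M\subseteq M_1,E_M)$ get $M_2,e_2,E_{M_1}$. Let $A=C_{M_1}(N)$, $B=C_{M_2}(M)$,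 $C=C_{M_2}(N)$. Depth 2 is assumed: $M_1$ is free as right $M$-module with basis in $A$, $M_2$ free as right $M_1$-module with basis in $B$. Let $F=E_M\circ E_{M_1}$; for $c\in C$, $F(c)\in C_M(N)=k1$, identified with $k$ (note $ae_2e_1b\in C$). *)

(* Defs.v *)
From HB Require Import structures.
From mathcomp Require Import all_boot all_algebra.
Set Implicit Arguments. Unset Strict Implicit. Unset Printing Implicit Defensive.
Import GRing.Theory.
Local Open Scope ring_scope.

(* Concrete model of the Jones basic construction for a strongly separable
   extension N ⊆ M with conditional expectation E and quasi-basis (x_i, y_i).
   M_1 = M ⊗_N M is modelled by its (injective, thanks to the quasi-basis)
   image in maps M -> M : a ⊗ b  |->  (z |-> a E(b z)); the product of M_1 is
   then composition, 1 = id, M ⊆ M_1 is left multiplication, e_1 = E.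
   M_2 = M_1 ⊗_M M_1 is likewise modelled by maps M_1 -> M_1 :
   φ ⊗ ψ |-> (χ |-> φ · E_M(ψ χ)). *)

Section BasicConstruction.
Variables (k : fieldType) (M : algType k).
Variables (E : M -> M) (n : nat) (x y : 'I_n -> M) (lam : k).

Definition T1 := M -> M.
Definition T2 := T1 -> T1.

Definition eq1 (f g : T1) : Prop := forall z, f z = g z.
Definition zero1 : T1 := fun _ => 0.
Definition comp1 (f g : T1) : T1 := fun z => f (g z).
(* embedding M -> M_1,  r |-> sum_i r x_i ⊗ y_i  =  left multiplication *)
Definition lmul (m : M) : T1 := fun z => m * z.
(* M_1 = M ⊗_N M : the elements sum_j a_j ⊗ b_j *)
Definition inM1 (f : T1) : Prop :=
  exists r (a b : 'I_r -> M), eq1 f (fun z => \sum_(j < r) a j * E (b j * z)).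
(* Jones idempotent e_1 = 1 ⊗ 1 *)
Definition e1 : T1 := E.
(* E_M : M_1 -> M,  a ⊗ b |-> lam a b *)
Definition EM (f : T1) : M := lam *: \sum_(i < n) f (x i) * y i.
(* quasi-basis of M ⊆ M_1 : lam^-1 x_i ⊗ 1 and 1 ⊗ y_i *)
Definition X1 (i : 'I_n) : T1 := fun z => lam^-1 *: (x i * E z).
Definition Y1 (i : 'I_n) : T1 := fun z => E (y i * z).

Definition eq2 (F G : T2) : Prop := forall f, inM1 f -> eq1 (F f) (G f).
Definition zero2 : T2 := fun _ => zero1.
Definition comp2 (F G : T2) : T2 := fun f => F (G f).
Definition lmul1 (f : T1) : T2 := fun g => comp1 f g.
(* M_2 = M_1 ⊗_M M_1 : the elements sum_j u_j ⊗ v_j *)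
Definition inM2 (F : T2) : Prop :=
  exists r (u v : 'I_r -> T1), (forall j, inM1 (u j) /\ inM1 (v j)) /\
    eq2 F (fun g z => \sum_(j < r) u j (EM (comp1 (v j) g) * z)).
(* Jones idempotent e_2 = 1 ⊗ 1 in M_2 *)
Definition e2 : T2 := fun g => lmul (EM g).
Definition EM1 (F : T2) : T1 := fun z => lam *: \sum_(i < n) F (X1 i) (Y1 i z).

Definition inA (Npred : {pred M}) (f : T1) : Prop :=
  inM1 f /\ forall m, m \in Npred -> eq1 (comp1 f (lmul m)) (comp1 (lmul m) f).
Definition inB (F : T2) : Prop :=
  inM2 F /\ forall m : M,
    eq2 (comp2 F (lmul1 (lmul m))) (comp2 (lmul1 (lmul m)) F).

Definition Fmap (G : T2) : M := EM (EM1 G).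

(* the bilinear form <a,b> = lam^-2 F(a e_2 e_1 b) (value in k1 ⊆ M) *)
Definition pairing (a : T1) (b : T2) : M :=
  lam ^- 2 *: Fmap (comp2 (lmul1 a) (comp2 e2 (comp2 (lmul1 e1) b))).

(* depth 2: M_1 free as right M-module with (finite) basis in A *)
Definition depth2_M1 (Npred : {pred M}) : Prop :=
  exists p (alpha : 'I_p -> T1),
    (forall j, inA Npred (alpha j)) /\
    (forall f, inM1 f -> exists c : 'I_p -> M,
        eq1 f (fun z => \sum_(j < p) alpha j (c j * z))) /\
    (forall c : 'I_p -> M,
        eq1 (fun z => \sum_(j < p) alpha j (c j * z)) zero1 ->
        forall j, c j = 0).

(* depth 2: M_2 free as right M_1-module with (finite) basis in B *)
Definition depth2_M2 : Prop :=
  exists q (beta : 'I_q -> T2),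
    (forall j, inB (beta j)) /\
    (forall F, inM2 F -> exists c : 'I_q -> T1,
        (forall j, inM1 (c j)) /\
        eq2 F (fun g z => \sum_(j < q) beta j (comp1 (c j) g) z)) /\
    (forall c : 'I_q -> T1, (forall j, inM1 (c j)) ->
        eq2 (fun g z => \sum_(j < q) beta j (comp1 (c j) g) z) zero2 ->
        forall j, eq1 (c j) zero1).

End BasicConstruction.
Arguments zero1 {k M}.
Arguments zero2 {k M}.

(* Main.v *)
Set Warnings "-notation-overridden,-ambiguous-paths,-notation-incompatible-prefix".
Require Import Defs.
From mathcomp Require Import all_boot all_algebra.
Set Implicit Arguments. Unset Strict Implicit. Unset Printing Implicit Defensive.
Import GRing.Theory.
Local Open Scope ring_scope.

Section Aux.
Variables (k : fieldType) (M : algType k) (Npred : {pred M}).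
Hypothesis hN : subalg_closed Npred.
Variable E : M -> M.
Hypothesis hEN : forall m, E m \in Npred.
Hypothesis hEadd : forall m m', E (m + m') = E m + E m'.
Hypothesis hEbimod : forall a m b, a \in Npred -> b \in Npred -> E (a * m * b) = a * E m * b.
Variables (n : nat) (x y : 'I_n -> M) (lam : k).
Hypothesis hlam : lam != 0.
Hypothesis hqb1 : forall m, \sum_(i < n) E (m * x i) * y i = m.
Hypothesis hqb2 : forall m, \sum_(i < n) x i * E (y i * m) = m.
Hypothesis hE1 : E 1 = 1.

Lemma N1 : 1 \in Npred. Proof. by case: hN. Qed.
Lemma NM a b : a \in Npred -> b \in Npred -> a * b \in Npred.
Proof. by case: hN => _ _ h; apply: h. Qed.
Lemma N0 : 0 \in Npred.
Proof. case: hN => h1 hl _. have := hl (-1) 1 1 h1 h1. by rewrite scaleN1r addNr. Qed.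
Lemma NA c : c%:A \in Npred.
Proof. case: hN => h1 hl _. have := hl c 1 0 h1 N0. by rewrite addr0. Qed.

Lemma EL a m : a \in Npred -> E (a * m) = a * E m.
Proof. move=> ha. by have := hEbimod m ha N1; rewrite !mulr1. Qed.
Lemma ER a m : a \in Npred -> E (m * a) = E m * a.
Proof. move=> ha. by have := hEbimod m N1 ha; rewrite !mul1r. Qed.
Lemma E0 : E 0 = 0.
Proof. have h := hEadd 0 0. rewrite addr0 in h. by apply: (addrI (E 0)); rewrite addr0 -h. Qed.
Lemma Esum I (r : seq I) (P : pred I) (F : I -> M) :
  E (\sum_(i <- r | P i) F i) = \sum_(i <- r | P i) E (F i).
Proof. exact: (big_morph E hEadd E0). Qed.
Lemma EZ c m : E (c *: m) = c *: E m.
Proof. by rewrite -mulr_algl EL ?NA // mulr_algl. Qed.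

Definition RN (h : M -> M) :=
  (forall w w', h (w + w') = h w + h w') /\
  (forall w nn, nn \in Npred -> h (w * nn) = h w * nn).
Definition LN (h : M -> M) := forall nn w, nn \in Npred -> h (nn * w) = nn * h w.

Lemma RN0 h : RN h -> h 0 = 0.
Proof. case=> ha _. have e := ha 0 0. rewrite addr0 in e. by apply: (addrI (h 0)); rewrite addr0 -e. Qed.
Lemma RNsum h I (r : seq I) (P : pred I) (F : I -> M) : RN h ->
  h (\sum_(i <- r | P i) F i) = \sum_(i <- r | P i) h (F i).
Proof. move=> hh. exact: (big_morph h hh.1 (RN0 hh)). Qed.
Lemma RNZ h c w : RN h -> h (c *: w) = c *: h w.
Proof. move=> hh. by rewrite -mulr_algr hh.2 ?NA // mulr_algr. Qed.
Lemma RNexp h z : RN h -> h z = \sum_(i < n) h (x i) * E (y i * z).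
Proof.
move=> hh. rewrite -{1}(hqb2 z) RNsum //. apply: eq_bigr => i _. by rewrite hh.2.
Qed.
Lemma inM1_RN h : inM1 E h -> RN h.
Proof.
case=> r [a [b hb]]. split.
- move=> w w'. rewrite !hb -big_split /=. apply: eq_bigr => j _.
  by rewrite mulrDr hEadd mulrDr.
- move=> w nn hn. rewrite !hb mulr_suml. apply: eq_bigr => j _.
  by rewrite mulrA ER // mulrA.
Qed.
Lemma RN_inM1 h : RN h -> inM1 E h.
Proof. move=> hh. exists n, (fun i => h (x i)), y => z. exact: RNexp. Qed.
Lemma EMr h c : RN h -> \sum_(i < n) h (c * x i) * y i = (\sum_(i < n) h (x i) * y i) * c.
Proof.
move=> hh.
under eq_bigr => i _ do rewrite (RNexp (c * x i) hh) mulr_suml.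
rewrite exchange_big /= mulr_suml. apply: eq_bigr => j _.
under eq_bigr => i _ do rewrite -mulrA.
rewrite -mulr_sumr.
under eq_bigr => i _ do rewrite mulrA.
by rewrite hqb1 mulrA.
Qed.
Lemma inA_LN h : inA E Npred h -> LN h.
Proof. case=> _ hA nn w hn. exact: (hA nn hn w). Qed.


Lemma RN_comp f g : RN f -> RN g -> RN (comp1 f g).
Proof.
move=> hf hg; split=> [w w'|w nn hn]; rewrite /comp1.
- by rewrite hg.1 hf.1.
- by rewrite hg.2 // hf.2.
Qed.
Lemma RN_E : RN E.
Proof. split=> [w w'|w nn hn]; [exact: hEadd | exact: ER]. Qed.
Lemma RN_lmul m : RN (lmul m).
Proof. split=> [w w'|w nn hn]; rewrite /lmul; [exact: mulrDr | exact: mulrA]. Qed.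
Lemma RN_id : RN (fun w => w).
Proof. by split. Qed.
Lemma inM1_comp f g : inM1 E f -> inM1 E g -> inM1 E (comp1 f g).
Proof. move=> /inM1_RN hf /inM1_RN hg; apply: RN_inM1; exact: RN_comp. Qed.

Lemma EM_cong f g : eq1 f g -> EM x y lam f = EM x y lam g.
Proof. move=> h; rewrite /EM; congr (_ *: _); apply: eq_bigr => i _; by rewrite h. Qed.

Lemma EM_rmul h c : RN h -> EM x y lam (comp1 h (lmul c)) = EM x y lam h * c.
Proof. move=> hh. by rewrite /EM /comp1 /lmul EMr // scalerAl. Qed.

Lemma EM_E : EM x y lam E = lam%:A.
Proof.
rewrite /EM. have := hqb1 1. under eq_bigr => i _ do rewrite mul1r. by move=> ->.
Qed.

Section M2.
Variable b : T2 M.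
Hypothesis hb : inM2 E x y lam b.

Lemma M2_cong g1 g2 : inM1 E g1 -> inM1 E g2 -> eq1 g1 g2 -> eq1 (b g1) (b g2).
Proof.
case: hb => r [u [v [_ hF]]] h1 h2 h12 z.
rewrite (hF _ h1) (hF _ h2). apply: eq_bigr => j _.
by rewrite (@EM_cong (comp1 (v j) g1) (comp1 (v j) g2)) // => w; rewrite /comp1 h12.
Qed.

Lemma M2_RN g : inM1 E g -> RN (b g).
Proof.
case: hb => r [u [v [huv hF]]] hg. split=> [w w'|w nn hn].
- rewrite !(hF _ hg) -big_split /=. apply: eq_bigr => j _.
  by rewrite mulrDr (inM1_RN (huv j).1).1.
- rewrite !(hF _ hg) mulr_suml. apply: eq_bigr => j _.
  by rewrite mulrA (inM1_RN (huv j).1).2.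
Qed.

Lemma M2_rmul g c : inM1 E g -> eq1 (b (comp1 g (lmul c))) (fun z => b g (c * z)).
Proof.
case: hb => r [u [v [huv hF]]] hg z.
have hgc : inM1 E (comp1 g (lmul c)) by apply: inM1_comp => //; exact: RN_inM1 (RN_lmul c).
rewrite (hF _ hg) (hF _ hgc). apply: eq_bigr => j _.
have -> : comp1 (v j) (comp1 g (lmul c)) = comp1 (comp1 (v j) g) (lmul c) by [].
rewrite EM_rmul ?mulrA //. apply: RN_comp; apply: inM1_RN => //. exact: (huv j).2.
Qed.

Lemma M2_sum (G : 'I_n -> T1 M) : (forall i, inM1 E (G i)) ->
  eq1 (b (fun w => \sum_(i < n) G i w)) (fun z => \sum_(i < n) b (G i) z).
Proof.
case: hb => r [u [v [huv hF]]] hG z.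
have hS : inM1 E (fun w => \sum_(i < n) G i w).
  apply: RN_inM1; split=> [w w'|w nn hn].
  - rewrite -big_split /=; apply: eq_bigr => i _. by rewrite (inM1_RN (hG i)).1.
  - rewrite mulr_suml; apply: eq_bigr => i _. by rewrite (inM1_RN (hG i)).2.
rewrite (hF _ hS).
under [RHS]eq_bigr => i _ do rewrite (hF _ (hG i)).
rewrite exchange_big /=. apply: eq_bigr => j _.
have hu := inM1_RN (huv j).1. have hv := inM1_RN (huv j).2.
rewrite -(RNsum _ _ _ hu) -mulr_suml. congr (u j (_ * z)).
rewrite /EM /comp1 -scaler_sumr. congr (_ *: _).
under eq_bigr => l _ do rewrite (RNsum _ _ _ hv) mulr_suml.
by rewrite exchange_big.
Qed.

End M2.

Lemma B_lmul b m g : inB E x y lam b -> inM1 E g ->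
  eq1 (b (comp1 (lmul m) g)) (comp1 (lmul m) (b g)).
Proof. case=> _ h hg. exact: (h m g hg). Qed.

Lemma inM1_E : inM1 E E.
Proof. exact: RN_inM1 RN_E. Qed.
Lemma inM1_lmul m : inM1 E (lmul m).
Proof. exact: RN_inM1 (RN_lmul m). Qed.

Section B.
Variable b : T2 M.
Hypothesis hb : inB E x y lam b.
Let hb2 : inM2 E x y lam b. Proof. by case: hb. Qed.

Lemma B_tA : inA E Npred (b E).
Proof.
split; first exact: RN_inM1 (M2_RN hb2 inM1_E).
move=> nn hn z. rewrite /comp1 /lmul.
rewrite -(M2_rmul hb2 nn inM1_E z).
have -> : b (comp1 E (lmul nn)) z = b (comp1 (lmul nn) E) z.
  apply: M2_cong => //.
  - apply: inM1_comp; [exact: inM1_E | exact: inM1_lmul].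
  - apply: inM1_comp; [exact: inM1_lmul | exact: inM1_E].
  - move=> w; rewrite /comp1 /lmul. exact: EL.
exact: (B_lmul nn hb inM1_E z).
Qed.

Lemma B_expand g z : inM1 E g -> b g z = \sum_(i < n) g (x i) * b E (y i * z).
Proof.
move=> hg. have hRg := inM1_RN hg.
pose G i := comp1 (lmul (g (x i))) (comp1 E (lmul (y i))).
have hG : forall i, inM1 E (G i).
  move=> i; apply: inM1_comp; first exact: inM1_lmul.
  apply: inM1_comp; [exact: inM1_E | exact: inM1_lmul].
have hS : inM1 E (fun w => \sum_(i < n) G i w).
  apply: RN_inM1; split=> [w w'|w nn hn].
  - rewrite -big_split /=; apply: eq_bigr => i _. by rewrite (inM1_RN (hG i)).1.
  - rewrite mulr_suml; apply: eq_bigr => i _. by rewrite (inM1_RN (hG i)).2.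
rewrite (M2_cong hb2 hg hS (g2 := fun w => \sum_(i < n) G i w)); last first.
  move=> w. exact: RNexp.
rewrite (M2_sum hb2 hG). apply: eq_bigr => i _.
rewrite /G (B_lmul _ hb); last by apply: inM1_comp; [exact: inM1_E | exact: inM1_lmul].
by rewrite /comp1 /lmul (M2_rmul hb2 _ inM1_E).
Qed.

Lemma B_X1 i : eq1 (b (X1 E x lam i)) (fun w => lam^-1 *: (x i * b E w)).
Proof.
move=> w.
have -> : b (X1 E x lam i) w = b (comp1 (lmul (lam^-1 *: x i)) E) w.
  apply: M2_cong => //.
  - apply: RN_inM1; split=> [u v|u nn hn]; rewrite /X1.
    + by rewrite hEadd mulrDr scalerDr.
    + by rewrite ER // mulrA scalerAl.
  - apply: inM1_comp; [exact: inM1_lmul | exact: inM1_E].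
  - by move=> u; rewrite /X1 /comp1 /lmul scalerAl.
by rewrite (B_lmul _ hb inM1_E) /comp1 /lmul scalerAl.
Qed.
End B.

Lemma pairing_aux a (V : 'I_n -> M) : RN a ->
  lam ^- 2 *: (lam *: \sum_(i < n) (lam *: \sum_(j < n) a (V j * E (y j * x i))) * y i)
  = \sum_(i < n) a (V i) * y i.
Proof.
move=> ha.
under eq_bigr => i _ do under eq_bigr => j _ do rewrite ha.2 ?hEN //.
rewrite (eq_bigr (fun i => lam *: \sum_(j < n) a (V j) * E (y j * x i) * y i)); last first.
  by move=> i _; rewrite -scalerAl mulr_suml.
rewrite -scaler_sumr exchange_big /= !scalerA.
have -> : lam ^- 2 * lam * lam = 1 by rewrite -mulrA -expr2 mulVf // expf_neq0.
rewrite scale1r. apply: eq_bigr => j _.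
under eq_bigr => i _ do rewrite -mulrA.
by rewrite -mulr_sumr hqb1.
Qed.

Lemma pairing_eq a b : RN a ->
  pairing E x y lam a b =
  \sum_(i < n) a (EM x y lam (comp1 E (b (X1 E x lam i)))) * y i.
Proof.
move=> ha. exact: (pairing_aux (fun i => EM x y lam (comp1 E (b (X1 E x lam i)))) ha).
Qed.

Lemma W_eq h t i : eq1 h (fun w => lam^-1 *: (x i * t w)) ->
  EM x y lam (comp1 E h) = \sum_(l < n) E (x i * t (x l)) * y l.
Proof.
move=> hh. rewrite /EM /comp1.
under eq_bigr => l _ do rewrite hh EZ -scalerAl.
by rewrite -scaler_sumr scalerA mulfV // scale1r.
Qed.


Definition tau (al : T1 M) : T1 M := fun v => \sum_(m < n) x m * E (al (y m) * v).
Definition bal (al : T1 M) : T2 M := fun g z => \sum_(l < n) g (x l) * tau al (y l * z).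

Lemma tau_RN al : RN (tau al).
Proof.
split=> [w w'|w nn hn]; rewrite /tau.
- rewrite -big_split /=; apply: eq_bigr => m _. by rewrite mulrDr hEadd mulrDr.
- rewrite mulr_suml; apply: eq_bigr => m _. by rewrite mulrA ER // mulrA.
Qed.

Lemma tau_LN al : inA E Npred al -> LN (tau al).
Proof.
move=> hA nn v hn. have hR := inM1_RN hA.1. have hL := inA_LN hA.
rewrite /tau.
have e : forall m, al (y m) * nn = \sum_(l < n) E (y m * nn * x l) * al (y l).
  move=> m. rewrite -hR.2 // -{1}(hqb1 (y m * nn)) RNsum //.
  apply: eq_bigr => l _. by rewrite hL.
under eq_bigr => m _ do rewrite mulrA e mulr_suml Esum mulr_sumr.
rewrite exchange_big mulr_sumr /=. apply: eq_bigr => l _.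
under eq_bigr => m _ do rewrite -mulrA EL // mulrA -(mulrA (y m)).
by rewrite -mulr_suml hqb2 mulrA.
Qed.

Lemma tau_alpha al i : inA E Npred al ->
  \sum_(l < n) E (x i * tau al (x l)) * y l = al (x i).
Proof.
move=> hA. have hR := inM1_RN hA.1. have hL := inA_LN hA.
have e : forall l, E (x i * tau al (x l)) = E (al (x i) * x l).
  move=> l. rewrite /tau mulr_sumr Esum.
  under eq_bigr => m _ do rewrite mulrA ER //.
  rewrite -{2}(hqb1 (x i)) RNsum // mulr_suml Esum. apply: eq_bigr => m _.
  by rewrite hL ?hEN // -mulrA [RHS]EL ?hEN.
under eq_bigr => l _ do rewrite e. exact: hqb1.
Qed.

Lemma bal_X1 al i : inA E Npred al ->
  eq1 (bal al (X1 E x lam i)) (fun w => lam^-1 *: (x i * tau al w)).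
Proof.
move=> hA w. rewrite /bal /X1.
under eq_bigr => l _ do rewrite -scalerAl -mulrA.
rewrite -scaler_sumr -mulr_sumr. congr (_ *: (_ * _)).
rewrite -[in RHS](mul1r w) -[in RHS](hqb1 1) mulr_suml RNsum; last exact: tau_RN.
apply: eq_bigr => l _. by rewrite mul1r -mulrA [RHS](tau_LN hA) ?hEN.
Qed.

Lemma bal_inB al : inA E Npred al -> inB E x y lam (bal al).
Proof.
move=> hA. have hR := tau_RN al. have hL := tau_LN hA. split.
- exists n, (fun i w => lam^-1 *: (x i * tau al w)), (Y1 E y). split.
  + move=> i; split.
    * apply: RN_inM1; split=> [u v|u nn hn].
      - by rewrite hR.1 mulrDr scalerDr.
      - by rewrite hR.2 // mulrA scalerAl.
    * apply: RN_inM1; split=> [u v|u nn hn]; rewrite /Y1.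
      - by rewrite mulrDr hEadd.
      - by rewrite mulrA ER.
  + move=> g _ z. rewrite /bal /EM /comp1 /Y1.
    under [RHS]eq_bigr => i _ do rewrite -scalerAl RNZ // -scalerAr scalerA mulVf // scale1r mulr_suml (RNsum _ _ _ hR) mulr_sumr.
    rewrite exchange_big /=. apply: eq_bigr => l _.
    under eq_bigr => i _ do rewrite -mulrA hL // mulrA.
    by rewrite -mulr_suml hqb2.
- move=> m g _ z. rewrite /comp2 /lmul1 /bal /comp1 /lmul mulr_sumr.
  apply: eq_bigr => l _. by rewrite mulrA.
Qed.


Definition tstar (t : T1 M) : T1 M := fun w => \sum_(l < n) E (w * t (x l)) * y l.

Lemma tstar_RN t : inA E Npred t -> RN (tstar t).
Proof.
move=> hA. have hR := inM1_RN hA.1. have hL := inA_LN hA.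
split=> [w w'|w nn hn]; rewrite /tstar.
- rewrite -big_split /=; apply: eq_bigr => l _. by rewrite mulrDl hEadd mulrDl.
- have e : forall l, E (w * nn * t (x l)) =
      \sum_(m < n) E (w * t (x m)) * E (y m * nn * x l).
    move=> l. rewrite -mulrA -hL // (RNexp (nn * x l) hR) mulr_sumr Esum.
    apply: eq_bigr => m _. by rewrite mulrA ER ?hEN // mulrA.
  under eq_bigr => l _ do rewrite e mulr_suml.
  rewrite exchange_big mulr_suml /=. apply: eq_bigr => m _.
  under eq_bigr => l _ do rewrite -mulrA.
  by rewrite -mulr_sumr hqb1 mulrA.
Qed.

Lemma adj h m v : RN h -> E (m * h v) = E ((\sum_(l < n) E (m * h (x l)) * y l) * v).
Proof.
move=> hh. rewrite (RNexp v hh) mulr_sumr Esum mulr_suml Esum.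
apply: eq_bigr => l _. by rewrite mulrA ER ?hEN // -mulrA [RHS]EL ?hEN.
Qed.

Lemma nondeg u : (forall m, E (m * u) = 0) -> u = 0.
Proof. move=> H. rewrite -(hqb2 u) big1 // => i _. by rewrite H mulr0. Qed.

Lemma span_M1 f : depth2_M2 E x y lam -> inM1 E f ->
  exists q (d : 'I_q -> M) (ta : 'I_q -> T1 M),
    (forall j, inA E Npred (ta j)) /\ forall z, lam *: f z = \sum_(j < q) d j * ta j z.
Proof.
case=> q [beta [hB [hspan _]]] hf. have hRf := inM1_RN hf.
pose F : T2 M := fun g => comp1 f (lmul (EM x y lam g)).
have hF : inM2 E x y lam F.
  exists 1%N, (fun _ => f), (fun _ => fun w => w). split.
  - move=> j /=; split => //. apply: RN_inM1; exact: RN_id.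
  - move=> g _ z. by rewrite big_ord1.
case: (hspan F hF) => c [hc e].
exists q, (fun j => c j 1), (fun j => beta j E). split.
- move=> j. exact: B_tA.
- move=> z. have hfz : f (lam *: z) = lam *: f z by exact: RNZ.
  have := e E inM1_E z. rewrite /F /comp1 /lmul EM_E mulr_algl hfz => ->.
  apply: eq_bigr => j _.
  have hB2 : inM2 E x y lam (beta j) by case: (hB j).
  rewrite -[RHS](B_lmul _ (hB j) inM1_E z). apply: M2_cong => //.
  + exact: (inM1_comp (hc j) inM1_E).
  + apply: inM1_comp; [exact: inM1_lmul | exact: inM1_E].
  + move=> w. by rewrite /comp1 /lmul -{1}(mul1r (E w)) (inM1_RN (hc j)).2 ?hEN.
Qed.

Lemma dir1 (hD1 : depth2_M1 E Npred) a : inA E Npred a ->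
  (forall b, inB E x y lam b -> pairing E x y lam a b = 0) -> eq1 a zero1.
Proof.
move=> hA H z. have hRa := inM1_RN hA.1.
have key : forall al, inA E Npred al -> \sum_(i < n) a (al (x i)) * y i = 0.
  move=> al hal. have := H _ (bal_inB hal). rewrite pairing_eq //.
  under eq_bigr => i _ do rewrite (W_eq (bal_X1 i hal)) (tau_alpha i hal).
  by [].
case: hD1 => p [alpha [hal [hspan _]]].
have hf : inM1 E (fun w => z * E w) := RN_inM1 (RN_comp (RN_lmul z) RN_E).
case: (hspan _ hf) => c hc.
have e1 : a z = \sum_(i < n) a (z * E (x i)) * y i.
  under eq_bigr => i _ do rewrite hRa.2 ?hEN // -mulrA.
  rewrite -mulr_sumr. have := hqb1 1. under eq_bigr => i _ do rewrite mul1r.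
  by move=> ->; rewrite mulr1.
rewrite /zero1 e1.
under eq_bigr => i _ do rewrite (hc (x i)) (RNsum _ _ _ hRa) mulr_suml.
rewrite exchange_big big1 // => j _ /=.
have := EMr (c j) (RN_comp hRa (inM1_RN (hal j).1)). rewrite /comp1 => ->.
by rewrite key ?mul0r.
Qed.

Lemma dir2 (hD2 : depth2_M2 E x y lam) b : inB E x y lam b ->
  (forall a, inA E Npred a -> pairing E x y lam a b = 0) -> eq2 E b zero2.
Proof.
move=> hb H g hg z.
have htA := B_tA hb. have hRt := inM1_RN htA.1.
have hW : forall a, inA E Npred a -> \sum_(i < n) a (tstar (b E) (x i)) * y i = 0.
  move=> a ha. have := H a ha. rewrite pairing_eq; last exact: inM1_RN ha.1.
  under eq_bigr => i _ do rewrite (W_eq (B_X1 hb i)).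
  by move=> h; exact: h.
have hf : forall f, inM1 E f -> \sum_(i < n) f (tstar (b E) (x i)) * y i = 0.
  move=> f hf. case: (span_M1 hD2 hf) => q [d [ta [hta hd]]].
  suff e : lam *: \sum_(i < n) f (tstar (b E) (x i)) * y i = 0.
    by rewrite -[LHS]scale1r -(mulVf hlam) -scalerA e scaler0.
  rewrite scaler_sumr. under eq_bigr => i _ do rewrite scalerAl hd mulr_suml.
  rewrite exchange_big big1 // => j _ /=.
  under eq_bigr => i _ do rewrite -mulrA.
  by rewrite -mulr_sumr hW // mulr0.
have h1 : forall m, \sum_(i < n) E (m * tstar (b E) (x i)) * y i = 0.
  move=> m. exact: (hf (fun w => E (m * w)) (RN_inM1 (RN_comp RN_E (RN_lmul m)))).
have ts0 : forall v, tstar (b E) v = 0.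
  move=> v. apply: nondeg => m. by rewrite (adj m v (tstar_RN htA)) h1 mul0r E0.
have t0 : forall w, b E w = 0.
  move=> w. apply: nondeg => v. rewrite (adj v w hRt).
  have := ts0 v. rewrite /tstar => ->. by rewrite mul0r E0.
rewrite /zero2 /zero1 (B_expand hb z hg) big1 // => i _. by rewrite t0 mulr0.
Qed.
End Aux.

Theorem proposition4p1
  (k : fieldType) (M : algType k) (Npred : {pred M})
  (hN : subalg_closed Npred)
  (E : M -> M)
  (hEN : forall m, E m \in Npred)
  (hEadd : forall m m', E (m + m') = E m + E m')
  (hEbimod : forall a m b, a \in Npred -> b \in Npred -> E (a * m * b) = a * E m * b)
  (hirr : forall m : M, (forall a, a \in Npred -> m * a = a * m) ->
            exists c : k, m = c%:A)
  (n : nat) (x y : 'I_n -> M) (lam : k)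
  (hlam : lam != 0)
  (hqb1 : forall m, \sum_(i < n) E (m * x i) * y i = m)
  (hqb2 : forall m, \sum_(i < n) x i * E (y i * m) = m)
  (hE1 : E 1 = 1)
  (hxy : \sum_(i < n) x i * y i = lam^-1%:A)
  (hD1 : depth2_M1 E Npred)
  (hD2 : depth2_M2 E x y lam) :
  (forall a, inA E Npred a ->
     (forall b, inB E x y lam b -> pairing E x y lam a b = 0) -> eq1 a zero1) /\
  (forall b, inB E x y lam b ->
     (forall a, inA E Npred a -> pairing E x y lam a b = 0) -> eq2 E b zero2).
Proof.
split.
- exact: (dir1 hN hEN hEadd hEbimod hlam hqb1 hqb2 hD1).
- exact: (dir2 hN hEN hEadd hEbimod hlam hqb1 hqb2 hD2).
Qed.
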